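(* Let $\mathsf T$ be the monad on $\mathbf{Grph}=[\mathbb G_1^{\mathrm{op}},\mathbf{Set}]$ whose algebras are involutive graphs. Then $\mathsf T$ is $\Delta_0$-nervous and its underlying endofunctor is $\Delta_0$-induced, but $\mathsf T$ does not have arities $\Delta_0$.
   Context: Here $\mathcal V=\mathbf{Set}$. $\mathbb G_1$ is the category freely generated by two parallel arrows $0\rightrightarrows 1$, so a graph is $s,t\colon X_1\rightrightarrows X_0$. An involutive graph is a graph with an automorphism $i\colon X_1\to X_1$ of order $2$ with $si=t$ (hence $ti=s$); morphisms are graph maps commuting with the involutions; $\mathsf T$ is the monad of the free-forgetful adjunction between involutive graphs and $\mathbf{Grph}$. $\Delta_0$ is the full subcategory of $\mathbf{Grph}$ on the graphs $[n]=(0\to 1\to\cdots\to n)$ for $n\ge 0$; it is small and dense, with inclusion $K$ and nerve $N_K(X)=\mathbf{Grph}(K-,X)$; for a functor $H$ with small domain an $H$-nerve is a presheaf in the essential image of $N_H$. For a monad $\mathsf T$, let $\Delta_0\xrightarrow{J_{\mathsf T}}\mathcal A_{\mathsf T}\xrightarrow{K_{\mathsf T}}\mathbf{Grph}^{\mathsf T}$ be the (identity-on-objects, fully faithful) factorisation of $F^{\mathsf T}K$; $\mathsf T$ is $\Delta_0$-nervous if $K_{\mathsf T}$ is dense (i.e. $N_{K_{\mathsf T}}$ fully faithful) and a presheaf $X$ on $\mathcal A_{\mathsf T}$ is a $K_{\mathsf T}$-nerve iff $X\circ J_{\mathsf T}^{\mathrm{op}}$ is a $K$-nerve. An endofunctor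 $T$ is $\Delta_0$-induced if it is the pointwise left Kan extension along $K$ of $TK$; it has arities $\Delta_0$ if $N_KT$ is the left Kan extension along $K$ of $N_KTK$; a monad has arities $\Delta_0$ if its underlying endofunctor does. *)

(* Defs.v *)
From Stdlib Require Import ProofIrrelevance FunctionalExtensionality.
From mathcomp Require Import all_boot.
Set Implicit Arguments. Unset Strict Implicit. Unset Printing Implicit Defensive.

Record graph := Graph { gV : Type; gE : Type; gsrc : gE -> gV; gtgt : gE -> gV }.

Record gmor (X Y : graph) := GMor {
  mV : gV X -> gV Y;
  mE : gE X -> gE Y;
  msrc : forall e, @gsrc Y (mE e) = mV (@gsrc X e);
  mtgt : forall e, @gtgt Y (mE e) = mV (@gtgt X e) }.

Definition gid (X : graph) : gmor X X :=
  @GMor X X id id (fun e => erefl) (fun e => erefl).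

Definition gcomp (X Y Z : graph) (g : gmor Y Z) (f : gmor X Y) : gmor X Z :=
  @GMor X Z (fun v => mV g (mV f v)) (fun e => mE g (mE f e))
    (fun e => eq_trans (msrc g (mE f e)) (f_equal (mV g) (msrc f e)))
    (fun e => eq_trans (mtgt g (mE f e)) (f_equal (mV g) (mtgt f e))).

Lemma gmor_ext (X Y : graph) (f g : gmor X Y) :
  mV f = mV g -> mE f = mE g -> f = g.
Proof.
case: f => fV fE fs ft; case: g => gV' gE' gs gt /= HV HE.
subst; f_equal; apply: proof_irrelevance.
Qed.

(* ---------- The graphs [n] = (0 -> 1 -> ... -> n) of Delta_0 ---------- *)
Definition simp (n : nat) : graph :=
  @Graph 'I_n.+1 'I_n (fun i => widen_ord (leqnSn n) i) (fun i => lift ord0 i).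

Record igraph := IGraph {
  ig :> graph;
  inv : gE ig -> gE ig;
  invK : forall e, inv (inv e) = e;
  src_inv : forall e, @gsrc ig (inv e) = @gtgt ig e }.

Record imor (A B : igraph) := IMor {
  im :> gmor A B;
  im_inv : forall e, mE im (@inv A e) = @inv B (mE im e) }.

Lemma imor_ext (A B : igraph) (f g : imor A B) : im f = im g -> f = g.
Proof. case: f => f Hf; case: g => g Hg /= E; subst; f_equal; apply: proof_irrelevance. Qed.

Definition iid (A : igraph) : imor A A := @IMor A A (gid A) (fun e => erefl).

Definition icomp (A B C : igraph) (g : imor B C) (f : imor A B) : imor A C :=
  @IMor A C (gcomp g f)
    (fun e => eq_trans (f_equal (mE g) (im_inv f e)) (im_inv g (mE f e))).

(* T X has the vertices of X and an edge e' : y -> x for every edge e : x -> y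
   added; T = U F is the monad of the free-forgetful adjunction. *)
Definition Tg (X : graph) : graph :=
  @Graph (gV X) (gE X + gE X)
    (fun e => match e with inl e => @gsrc X e | inr e => @gtgt X e end)
    (fun e => match e with inl e => @gtgt X e | inr e => @gsrc X e end).

Definition swapE (T : Type) (e : T + T) : T + T :=
  match e with inl e => inr e | inr e => inl e end.

Definition Fi (X : graph) : igraph.
Proof.
refine (@IGraph (Tg X) (@swapE (gE X)) _ _); by case.
Defined.

Definition Tmor (X Y : graph) (f : gmor X Y) : gmor (Tg X) (Tg Y).
Proof.
refine (@GMor (Tg X) (Tg Y) (mV f)
   (fun e => match e with inl e => inl (mE f e) | inr e => inr (mE f e) end) _ _);
  case=> e /=; [exact: msrc | exact: mtgt | exact: mtgt | exact: msrc].
Defined.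

Definition Fmor (X Y : graph) (f : gmor X Y) : imor (Fi X) (Fi Y).
Proof. refine (@IMor (Fi X) (Fi Y) (Tmor f) _); by case. Defined.

Lemma Fmor_id (X : graph) : Fmor (gid X) = iid (Fi X).
Proof.
apply: imor_ext; apply: gmor_ext => //=.
by apply: functional_extensionality; case.
Qed.

Lemma Fmor_comp (X Y Z : graph) (g : gmor Y Z) (f : gmor X Y) :
  Fmor (gcomp g f) = icomp (Fmor g) (Fmor f).
Proof.
apply: imor_ext; apply: gmor_ext => //=.
by apply: functional_extensionality; case.
Qed.

Record precat := PreCat {
  hom : nat -> nat -> Type;
  hcomp : forall a b c, hom b c -> hom a b -> hom a c;
  hid : forall a, hom a a }.

Record psh (C : precat) := Psh {
  pobj : nat -> Type;
  pact : forall n m, hom C n m -> pobj m -> pobj n;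
  pact_id : forall n x, pact (hid C n) x = x;
  pact_comp : forall a b c (g : hom C b c) (f : hom C a b) x,
      pact (hcomp g f) x = pact f (pact g x) }.

Record pnat (C : precat) (P Q : psh C) := PNat {
  pcomp : forall n, pobj P n -> pobj Q n;
  pnatural : forall n m (f : hom C n m) x,
      pcomp (pact f x) = pact f (pcomp x) }.

Definition piso (C : precat) (P Q : psh C) : Prop :=
  exists (a : pnat P Q) (b : pnat Q P),
    (forall n (x : pobj P n), pcomp b (pcomp a x) = x) /\
    (forall n (x : pobj Q n), pcomp a (pcomp b x) = x).

Definition Delta0 : precat :=
  @PreCat (fun n m => gmor (simp n) (simp m))
          (fun a b c g f => gcomp g f) (fun a => gid (simp a)).

(* A_T : full subcategory of algebras on the free algebras F[n]
   (J_T is identity on objects, F on morphisms; K_T sends n to F[n]) *)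
Definition AT : precat :=
  @PreCat (fun n m => imor (Fi (simp n)) (Fi (simp m)))
          (fun a b c g f => icomp g f) (fun a => iid (Fi (simp a))).

Definition NK (X : graph) : psh Delta0.
Proof.
refine (@Psh Delta0 (fun n => gmor (simp n) X)
               (fun n m f x => gcomp x f) _ _).
- by move=> n x; apply: gmor_ext.
- by move=> a b c g f x; apply: gmor_ext.
Defined.

Definition NKmap (X Y : graph) (h : gmor X Y) : pnat (NK X) (NK Y).
Proof.
refine (@PNat Delta0 (NK X) (NK Y) (fun n x => gcomp h x) _).
by move=> n m f x; apply: gmor_ext.
Defined.

Definition NKT (A : igraph) : psh AT.
Proof.
refine (@Psh AT (fun n => imor (Fi (simp n)) A)
               (fun n m f x => icomp x f) _ _).
- by move=> n x; apply: imor_ext; apply: gmor_ext.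
- by move=> a b c g f x; apply: imor_ext; apply: gmor_ext.
Defined.

Definition restrictJ (X : psh AT) : psh Delta0.
Proof.
refine (@Psh Delta0 (pobj X) (fun n m f x => @pact AT X n m (Fmor f) x) _ _).
- move=> n x /=. rewrite (Fmor_id (simp n)). exact: (@pact_id AT X).
- move=> a b c g f x /=. rewrite (Fmor_comp g f). exact: (@pact_comp AT X).
Defined.

Definition is_K_nerve (P : psh Delta0) : Prop := exists G : graph, piso P (NK G).
Definition is_KT_nerve (X : psh AT) : Prop := exists A : igraph, piso X (NKT A).

Definition KT_dense : Prop :=
  forall A B : igraph,
    (forall h h' : imor A B,
        (forall n (x : imor (Fi (simp n)) A), icomp h x = icomp h' x) -> h = h')
    /\ (forall alpha : pnat (NKT A) (NKT B),
        exists h : imor A B, forall n (x : imor (Fi (simp n)) A), pcomp alpha x = icomp h x).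

Definition Delta0_nervous : Prop :=
  KT_dense /\ (forall X : psh AT, is_KT_nerve X <-> is_K_nerve (restrictJ X)).

(* T is the pointwise left Kan extension along K of TK: for every graph X,
   the canonical cocone (T f : T[n] -> T X)_{(n, f : [n] -> X)} over K/X
   is a colimit in Grph. *)
Definition Delta0_induced : Prop :=
  forall X : graph, forall Y : graph,
  forall c : forall n, gmor (simp n) X -> gmor (Tg (simp n)) Y,
    (forall n m (u : gmor (simp n) (simp m)) (f : gmor (simp m) X),
        gcomp (c m f) (Tmor u) = c n (gcomp f u)) ->
    exists h : gmor (Tg X) Y,
      (forall n f, gcomp h (Tmor f) = c n f) /\
      (forall h' : gmor (Tg X) Y, (forall n f, gcomp h' (Tmor f) = c n f) -> h' = h).

(* T has arities Delta_0: N_K T is the left Kan extension along K of N_K T K,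
   i.e. for every graph X the canonical cocone
   (N_K (T f) : N_K T[n] -> N_K T X)_{(n, f : [n] -> X)} is a colimit in
   the presheaf category [Delta_0^op, Set]. *)
Definition has_arities_Delta0 : Prop :=
  forall X : graph, forall Y : psh Delta0,
  forall c : forall n, gmor (simp n) X -> pnat (NK (Tg (simp n))) Y,
    (forall n m (u : gmor (simp n) (simp m)) (f : gmor (simp m) X) k (x : gmor (simp k) (Tg (simp n))),
        pcomp (c m f) (pcomp (NKmap (Tmor u)) x) = pcomp (c n (gcomp f u)) x) ->
    exists h : pnat (NK (Tg X)) Y,
      (forall n (f : gmor (simp n) X) k (x : gmor (simp k) (Tg (simp n))), pcomp h (pcomp (NKmap (Tmor f)) x) = pcomp (c n f) x) /\
      (forall h' : pnat (NK (Tg X)) Y,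
          (forall n (f : gmor (simp n) X) k (x : gmor (simp k) (Tg (simp n))), pcomp h' (pcomp (NKmap (Tmor f)) x) = pcomp (c n f) x) ->
          forall k (x : gmor (simp k) (Tg X)), pcomp h' x = pcomp h x).

(* Main.v *)
Require Import Defs.
From Stdlib Require Import ProofIrrelevance FunctionalExtensionality.
From mathcomp Require Import all_boot.
Require Import Defs.
Set Implicit Arguments. Unset Strict Implicit. Unset Printing Implicit Defensive.

Definition elim0 (T : Type) (e : 'I_0) : T.
Proof. by case: e. Defined.

Definition gpt (G : graph) (v : gV G) : gmor (simp 0) G.
Proof. refine (@GMor (simp 0) G (fun _ => v) (@elim0 _) _ _); by case. Defined.

Definition gedge (G : graph) (e : gE G) : gmor (simp 1) G.
Proof.
refine (@GMor (simp 1) G (fun v : 'I_2 => if val v == 0 then gsrc e else gtgt e)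
   (fun _ => e) _ _); by case=> [[|k] Hk].
Defined.

Lemma tgt_inv (A : igraph) (e : gE A) : gtgt (inv e) = gsrc e.
Proof. by rewrite -src_inv invK. Qed.

Definition ipt (A : igraph) (v : gV A) : imor (Fi (simp 0)) A.
Proof.
unshelve refine (@IMor (Fi (simp 0)) A
  (@GMor (Tg (simp 0)) A (fun _ => v) (fun e => match e with inl e => elim0 _ e | inr e => elim0 _ e end) _ _) _);
  by case=> [[]|[]].
Defined.

Definition iedge (A : igraph) (e : gE A) : imor (Fi (simp 1)) A.
Proof.
unshelve refine (@IMor (Fi (simp 1)) A
  (@GMor (Tg (simp 1)) A (fun v : 'I_2 => if val v == 0 then gsrc e else gtgt e)
     (fun x => match x with inl _ => e | inr _ => inv e end) _ _) _).
- by case=> [] [[|k] Hk] //=; rewrite ?src_inv ?tgt_inv.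
- by case=> [] [[|k] Hk] //=; rewrite ?src_inv ?tgt_inv.
- by case=> [] [[|k] Hk] //=; rewrite invK.
Defined.

Lemma ord1E (e : 'I_1) : e = ord0.
Proof. by apply: val_inj; case: e => [[|k] Hk]. Qed.

Lemma gpt_eta (G : graph) (x : gmor (simp 0) G) : x = gpt (mV x ord0).
Proof.
apply: gmor_ext => /=; apply: functional_extensionality.
- by move=> v; rewrite (ord1E v).
- by case.
Qed.

Lemma gedge_eta (G : graph) (x : gmor (simp 1) G) : x = gedge (mE x ord0).
Proof.
apply: gmor_ext => /=; apply: functional_extensionality.
- case=> [[|[|k]] Hk] //=.
  + by rewrite msrc; congr (mV x); apply: val_inj.
  + by rewrite mtgt; congr (mV x); apply: val_inj.
- by move=> e; rewrite (ord1E e).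
Qed.

Lemma gcomp_gpt (G H : graph) (g : gmor G H) v : gcomp g (gpt v) = gpt (mV g v).
Proof. by apply: gmor_ext => //=; apply: functional_extensionality; case. Qed.

Lemma gcomp_gedge (G H : graph) (g : gmor G H) e : gcomp g (gedge e) = gedge (mE g e).
Proof.
apply: gmor_ext => //=; apply: functional_extensionality => v.
by case: ifP => _; rewrite ?msrc ?mtgt.
Qed.

Lemma imor_eq n (A : igraph) (x y : imor (Fi (simp n)) A) :
  mV x = mV y -> (forall j, mE x (inl j) = mE y (inl j)) -> x = y.
Proof.
move=> HV HE; apply: imor_ext; apply: gmor_ext => //.
apply: functional_extensionality; case=> j; first exact: HE.
have Hx := im_inv x (inl j); have Hy := im_inv y (inl j).
simpl in Hx, Hy. by rewrite Hx Hy HE.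
Qed.

Lemma ipt_eta (A : igraph) (x : imor (Fi (simp 0)) A) : x = ipt (mV x ord0).
Proof.
apply: imor_eq => /=; last by case.
by apply: functional_extensionality => v; rewrite (ord1E v).
Qed.

Lemma iedge_eta (A : igraph) (x : imor (Fi (simp 1)) A) : x = iedge (mE x (inl ord0)).
Proof.
apply: imor_eq => /=; last by move=> j; rewrite (ord1E j).
apply: functional_extensionality; case=> [[|[|k]] Hk] //=.
- by rewrite (msrc x (inl ord0)); congr (mV x); apply: val_inj.
- by rewrite (mtgt x (inl ord0)); congr (mV x); apply: val_inj.
Qed.

Lemma icomp_ipt (A B : igraph) (g : imor A B) v : icomp g (ipt v) = ipt (mV g v).
Proof. by apply: imor_eq => //; case. Qed.

Lemma icomp_iedge (A B : igraph) (g : imor A B) e : icomp g (iedge e) = iedge (mE g e).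
Proof.
apply: imor_eq => [|//].
apply: functional_extensionality => v /=.
by case: ifP => _; rewrite ?msrc ?mtgt.
Qed.

Lemma Fmor_gpt n (i : 'I_n.+1) : Fmor (gpt (G := simp n) i) = ipt (A := Fi (simp n)) i.
Proof. by apply: imor_eq => //; case. Qed.

Lemma Fmor_gedge n (j : 'I_n) : Fmor (gedge (G := simp n) j) = iedge (A := Fi (simp n)) (inl j).
Proof. by apply: imor_eq => //; case. Qed.

Definition sigma1 : imor (Fi (simp 1)) (Fi (simp 1)) := iedge (A := Fi (simp 1)) (inr ord0).

Lemma sigma1K : icomp sigma1 sigma1 = iid (Fi (simp 1)).
Proof. by rewrite /sigma1 icomp_iedge [iid _]iedge_eta. Qed.

Lemma iedge_sigma (A : igraph) (e : gE A) : icomp (iedge e) sigma1 = iedge (inv e).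
Proof. by rewrite /sigma1 icomp_iedge. Qed.

Lemma induced : Delta0_induced.
Proof.
move=> X Y c Hc.
have Hs : forall e, gsrc (mE (c 1 (gedge e)) (inl ord0)) = mV (c 0 (gpt (gsrc e))) ord0.
  move=> e; rewrite (msrc (c 1 (gedge e)) (inl ord0)).
  have := congr1 (fun g : gmor (Tg (simp 0)) Y => mV g ord0) (Hc 0 1 (gpt (@gsrc (simp 1) ord0)) (gedge e)).
  by rewrite gcomp_gpt /= => <-.
have Ht : forall e, gtgt (mE (c 1 (gedge e)) (inl ord0)) = mV (c 0 (gpt (gtgt e))) ord0.
  move=> e; rewrite (mtgt (c 1 (gedge e)) (inl ord0)).
  have := congr1 (fun g : gmor (Tg (simp 0)) Y => mV g ord0) (Hc 0 1 (gpt (@gtgt (simp 1) ord0)) (gedge e)).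
  by rewrite gcomp_gpt /= => <-.
have Hs' : forall e, gsrc (mE (c 1 (gedge e)) (inr ord0)) = mV (c 0 (gpt (gtgt e))) ord0.
  move=> e; rewrite (msrc (c 1 (gedge e)) (inr ord0)).
  have := congr1 (fun g : gmor (Tg (simp 0)) Y => mV g ord0) (Hc 0 1 (gpt (@gtgt (simp 1) ord0)) (gedge e)).
  by rewrite gcomp_gpt /= => <-.
have Ht' : forall e, gtgt (mE (c 1 (gedge e)) (inr ord0)) = mV (c 0 (gpt (gsrc e))) ord0.
  move=> e; rewrite (mtgt (c 1 (gedge e)) (inr ord0)).
  have := congr1 (fun g : gmor (Tg (simp 0)) Y => mV g ord0) (Hc 0 1 (gpt (@gsrc (simp 1) ord0)) (gedge e)).
  by rewrite gcomp_gpt /= => <-.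
pose h : gmor (Tg X) Y :=
  @GMor (Tg X) Y (fun v : gV X => mV (c 0 (gpt v)) ord0)
    (fun e => match e with inl e => mE (c 1 (gedge e)) (inl ord0)
                         | inr e => mE (c 1 (gedge e)) (inr ord0) end)
    (fun e => match e with inl e => Hs e | inr e => Hs' e end)
    (fun e => match e with inl e => Ht e | inr e => Ht' e end).
exists h; split.
- move=> n f; apply: gmor_ext => /=; apply: functional_extensionality.
  + move=> i; have := congr1 (fun g : gmor (Tg (simp 0)) Y => mV g ord0) (Hc 0 n (gpt (G:=simp n) i) f).
    by rewrite gcomp_gpt /= => <-.
  + case=> j /=; have := congr1 (fun g : gmor (Tg (simp 1)) Y => mE g) (Hc 1 n (gedge (G:=simp n) j) f);
    rewrite gcomp_gedge /= => <-; by [].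
- move=> h' Hh'; apply: gmor_ext => /=; apply: functional_extensionality.
  + move=> v; have := congr1 (fun g : gmor (Tg (simp 0)) Y => mV g ord0) (Hh' 0 (gpt (G:=X) v)); by move=> /= <-.
  + case=> e /=; have := congr1 (fun g : gmor (Tg (simp 1)) Y => mE g) (Hh' 1 (gedge (G:=X) e)); by move=> /= <-.
Qed.

Lemma KTdense : KT_dense.
Proof.
move=> A B; split.
- move=> h h' H; apply: imor_ext; apply: gmor_ext; apply: functional_extensionality.
  + move=> v; have := congr1 (fun g : imor (Fi (simp 0)) B => mV g ord0) (H 0 (ipt v)); by [].
  + move=> e; have := congr1 (fun g : imor (Fi (simp 1)) B => mE g (inl ord0)) (H 1 (iedge e)); by [].
- move=> alpha.
  have nat' : forall n m (f : imor (Fi (simp n)) (Fi (simp m))) (x : imor (Fi (simp m)) A),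
      pcomp alpha (icomp x f) = icomp (pcomp alpha x) f.
    move=> n m f x; exact: (pnatural alpha f x).
  have Hs : forall e, gsrc (mE (pcomp alpha (iedge e)) (inl ord0)) = mV (pcomp alpha (ipt (gsrc e))) ord0.
    move=> e; rewrite (msrc (pcomp alpha (iedge e)) (inl ord0)).
    have := icomp_ipt (iedge e) (@gsrc (simp 1) ord0); rewrite /= => <-.
    by rewrite nat'.
  have Ht : forall e, gtgt (mE (pcomp alpha (iedge e)) (inl ord0)) = mV (pcomp alpha (ipt (gtgt e))) ord0.
    move=> e; rewrite (mtgt (pcomp alpha (iedge e)) (inl ord0)).
    have := icomp_ipt (iedge e) (@gtgt (simp 1) ord0); rewrite /= => <-.
    by rewrite nat'.
  have Hi : forall e, mE (pcomp alpha (iedge (inv e))) (inl ord0) = inv (mE (pcomp alpha (iedge e)) (inl ord0)).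
    move=> e; rewrite -iedge_sigma nat' /=.
    exact: (im_inv (pcomp alpha (iedge e)) (inl ord0)).
  pose h0 : gmor A B := @GMor A B (fun v => mV (pcomp alpha (ipt v)) ord0)
      (fun e => mE (pcomp alpha (iedge e)) (inl ord0)) Hs Ht.
  exists (@IMor A B h0 Hi) => n x.
  apply: imor_eq => /=.
  + apply: functional_extensionality => i.
    by rewrite -(icomp_ipt x i) nat'.
  + by move=> j; rewrite -(icomp_iedge x (inl j)) nat'.
Qed.

Definition pncomp (C : precat) (P Q R : psh C) (b : pnat Q R) (a : pnat P Q) : pnat P R.
Proof.
refine (@PNat C P R (fun n x => pcomp b (pcomp a x)) _).
by move=> n m f x; rewrite !pnatural.
Defined.

Lemma piso_trans (C : precat) (P Q R : psh C) : piso P Q -> piso Q R -> piso P R.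
Proof.
move=> [a [b [H1 H2]]] [c [d [H3 H4]]].
exists (pncomp c a), (pncomp b d); split => n x /=.
- by rewrite H3 H1.
- by rewrite H2 H4.
Qed.

Definition restr_pnat (X Y : psh AT) (a : pnat X Y) : pnat (restrictJ X) (restrictJ Y).
Proof.
refine (@PNat Delta0 (restrictJ X) (restrictJ Y) (fun n x => @pcomp AT X Y a n x) _).
move=> n m f x /=; exact: (@pnatural AT X Y a).
Defined.

Lemma piso_restr (X Y : psh AT) : piso X Y -> piso (restrictJ X) (restrictJ Y).
Proof.
move=> [a [b [H1 H2]]]; exists (restr_pnat a), (restr_pnat b); split => n x /=.
- exact: H1.
- exact: H2.
Qed.

Definition restrm n (A : igraph) (x : imor (Fi (simp n)) A) : gmor (simp n) A :=
  @GMor (simp n) A (mV x) (fun j => mE x (inl j))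
    (fun j => msrc x (inl j)) (fun j => mtgt x (inl j)).

Definition trm n (A : igraph) (y : gmor (simp n) A) : imor (Fi (simp n)) A.
Proof.
unshelve refine (@IMor (Fi (simp n)) A
  (@GMor (Tg (simp n)) A (mV y)
     (fun e => match e with inl j => mE y j | inr j => inv (mE y j) end) _ _) _).
- by case=> j /=; [exact: msrc | rewrite src_inv; exact: mtgt].
- by case=> j /=; [exact: mtgt | rewrite tgt_inv; exact: msrc].
- by case=> j /=; rewrite ?invK.
Defined.

Lemma adj_iso (A : igraph) : piso (restrictJ (NKT A)) (NK (ig A)).
Proof.
unshelve eexists.
  refine (@PNat Delta0 (restrictJ (NKT A)) (NK (ig A)) (fun n x => restrm x) _).
  by move=> n m f x; apply: gmor_ext.
unshelve eexists.
  refine (@PNat Delta0 (NK (ig A)) (restrictJ (NKT A)) (fun n y => trm y) _).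
  by move=> n m f x; apply: imor_eq.
split => n x /=.
- by apply: imor_eq.
- by apply: gmor_ext.
Qed.


Definition aF (X : psh AT) (G : graph) (a : pnat (restrictJ X) (NK G)) n (x : pobj X n)
  : gmor (simp n) G := @pcomp _ _ _ a n x.
Definition bF (X : psh AT) (G : graph) (b : pnat (NK G) (restrictJ X)) n (y : gmor (simp n) G)
  : pobj X n := @pcomp _ _ _ b n y.

Lemma aF_nat (X : psh AT) (G : graph) (a : pnat (restrictJ X) (NK G)) n m
  (f : gmor (simp n) (simp m)) (x : pobj X m) :
  aF a (@pact AT X n m (Fmor f) x) = gcomp (aF a x) f.
Proof. exact: (pnatural a f x). Qed.

Lemma aF_V (X : psh AT) (G : graph) (a : pnat (restrictJ X) (NK G)) n (x : pobj X n) i :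
  mV (aF a x) i = mV (aF a (@pact AT X 0 n (ipt (A:=Fi (simp n)) i) x)) ord0.
Proof. by rewrite -Fmor_gpt aF_nat gcomp_gpt. Qed.

Lemma aF_E (X : psh AT) (G : graph) (a : pnat (restrictJ X) (NK G)) n (x : pobj X n) j :
  mE (aF a x) j = mE (aF a (@pact AT X 1 n (iedge (A:=Fi (simp n)) (inl j)) x)) ord0.
Proof. by rewrite -Fmor_gedge aF_nat gcomp_gedge. Qed.

Definition invF (X : psh AT) (G : graph) (a : pnat (restrictJ X) (NK G))
  (b : pnat (NK G) (restrictJ X)) (e : gE G) : gE G :=
  mE (aF a (@pact AT X 1 1 sigma1 (bF b (gedge e)))) ord0.

Lemma invF_S (X : psh AT) (G : graph) (a : pnat (restrictJ X) (NK G))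
  (b : pnat (NK G) (restrictJ X)) (Hba : forall n (x : pobj X n), bF b (aF a x) = x)
  (z : pobj X 1) :
  mE (aF a (@pact AT X 1 1 sigma1 z)) ord0 = invF a b (mE (aF a z) ord0).
Proof. by rewrite /invF -gedge_eta Hba. Qed.

Lemma invFK (X : psh AT) (G : graph) (a : pnat (restrictJ X) (NK G))
  (b : pnat (NK G) (restrictJ X)) (Hba : forall n (x : pobj X n), bF b (aF a x) = x)
  (Hab : forall n (y : gmor (simp n) G), aF a (bF b y) = y) e :
  invF a b (invF a b e) = e.
Proof.
rewrite {2}/invF -invF_S // -(@pact_comp AT X) /= sigma1K.
rewrite (@pact_id AT X) Hab //.
Qed.

Lemma src_invF (X : psh AT) (G : graph) (a : pnat (restrictJ X) (NK G))
  (b : pnat (NK G) (restrictJ X)) (Hab : forall n (y : gmor (simp n) G), aF a (bF b y) = y) e :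
  gsrc (invF a b e) = gtgt e.
Proof.
rewrite /invF msrc aF_V -(@pact_comp AT X) /= icomp_ipt /= -aF_V.
by rewrite Hab.
Qed.

Lemma nerve_back (X : psh AT) (G : graph) : piso (restrictJ X) (NK G) -> is_KT_nerve X.
Proof.
move=> [a [b [Hba Hab]]].
have Hba' : forall n (x : pobj X n), bF b (aF a x) = x by exact: Hba.
have Hab' : forall n (y : gmor (simp n) G), aF a (bF b y) = y by exact: Hab.
pose A := @IGraph G (invF a b) (invFK Hba' Hab') (src_invF Hab').
exists A.
have PhiN : forall n m (g : imor (Fi (simp n)) (Fi (simp m))) (x : pobj X m),
    trm (A:=A) (aF a (@pact AT X n m g x)) = icomp (trm (A:=A) (aF a x)) g.
  move=> n m g x; apply: imor_eq => /=.
  - apply: functional_extensionality => i.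
    by rewrite aF_V -(@pact_comp AT X) /= icomp_ipt -aF_V.
  - move=> j; rewrite aF_E -(@pact_comp AT X) /= icomp_iedge.
    case: (mE g (inl j)) => k /=; first by rewrite -aF_E.
    have -> : iedge (A:=Fi (simp m)) (inr k) = icomp (iedge (A:=Fi (simp m)) (inl k)) sigma1.
      by rewrite iedge_sigma.
    by rewrite (@pact_comp AT X) (invF_S Hba') -aF_E.
have PsiPhi : forall n (x : pobj X n), bF b (restrm (trm (A:=A) (aF a x))) = x.
  move=> n x; have -> : restrm (trm (A:=A) (aF a x)) = aF a x by apply: gmor_ext.
  exact: Hba'.
have PhiPsi : forall n (x : imor (Fi (simp n)) A), trm (A:=A) (aF a (bF b (restrm x))) = x.
  by move=> n x; rewrite Hab'; apply: imor_eq.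
unshelve eexists.
  refine (@PNat AT X (NKT A) (fun n x => trm (A:=A) (aF a x)) _).
  by move=> n m f x; apply: PhiN.
unshelve eexists.
  refine (@PNat AT (NKT A) X (fun n x => bF b (restrm x)) _).
  move=> n m f x /=.
  by rewrite -[RHS]PsiPhi PhiN PhiPsi.
split => n x /=.
- exact: PsiPhi.
- exact: PhiPsi.
Qed.

Lemma nervous : Delta0_nervous.
Proof.
split; first exact: KTdense.
move=> X; split.
- move=> [A HA]; exists (ig A).
  apply: piso_trans (adj_iso A); exact: piso_restr.
- move=> [G HG]; exact: nerve_back HG.
Qed.

Definition Xc : graph := @Graph nat bool (fun b => if b then 0 else 2) (fun _ => 1).

Definition facP k (x : gmor (simp k) (Tg Xc)) : Prop :=
  exists n (f : gmor (simp n) Xc) (y : gmor (simp k) (Tg (simp n))), x = gcomp (Tmor f) y.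

Lemma sig_eq (T : Type) (P : T -> Prop) (a b : {x | P x}) : proj1_sig a = proj1_sig b -> a = b.
Proof.
case: a => a Ha; case: b => b Hb /= E; subst; f_equal; apply: proof_irrelevance.
Qed.

Lemma facP_comp k l (x : gmor (simp l) (Tg Xc)) (u : gmor (simp k) (simp l)) :
  facP x -> facP (gcomp x u).
Proof.
move=> [n [f [y ->]]]; exists n, f, (gcomp y u); exact: gmor_ext.
Qed.

Definition Yc : psh Delta0.
Proof.
refine (@Psh Delta0 (fun k => {x : gmor (simp k) (Tg Xc) | facP x})
   (fun k l u x => exist _ (gcomp (proj1_sig x) u) (facP_comp u (proj2_sig x))) _ _).
- by move=> n x; apply: sig_eq; apply: gmor_ext.
- by move=> a b c g f x; apply: sig_eq; apply: gmor_ext.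
Defined.

Definition cc n (f : gmor (simp n) Xc) : pnat (NK (Tg (simp n))) Yc.
Proof.
refine (@PNat Delta0 (NK (Tg (simp n))) Yc
   (fun k y => exist _ (gcomp (Tmor f) y) (ex_intro _ n (ex_intro _ f (ex_intro _ y erefl)))) _).
by move=> k l u x; apply: sig_eq; apply: gmor_ext.
Defined.

Definition pth : gmor (simp 2) (Tg Xc).
Proof.
refine (@GMor (simp 2) (Tg Xc) (fun v : 'I_3 => val v)
  (fun j : 'I_2 => if val j == 0 then inl true else inr false) _ _);
  by case=> [[|[|k]] Hk].
Defined.

Lemma not_arities : ~ has_arities_Delta0.
Proof.
move=> H.
have Hc : forall n m (u : gmor (simp n) (simp m)) (f : gmor (simp m) Xc) k (x : gmor (simp k) (Tg (simp n))),
    pcomp (cc f) (pcomp (NKmap (Tmor u)) x) = pcomp (cc (gcomp f u)) x.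
  move=> n m u f k x; apply: sig_eq; apply: gmor_ext; first by [].
  by apply: functional_extensionality => e /=; case: (mE x e).
have [h [Hh _]] := H Xc Yc cc Hc.
pose j0 : 'I_2 := ord0.
pose j1 : 'I_2 := lift ord0 ord0.
have E0 : gcomp pth (gedge (G:=simp 2) j0)
    = gcomp (Tmor (gedge (G:=Xc) true)) (gedge (G:=Tg (simp 1)) (inl ord0)).
  apply: gmor_ext; apply: functional_extensionality.
  - by case=> [[|[|k]] Hk].
  - by move=> e; rewrite (ord1E e).
have E1 : gcomp pth (gedge (G:=simp 2) j1)
    = gcomp (Tmor (gedge (G:=Xc) false)) (gedge (G:=Tg (simp 1)) (inr ord0)).
  apply: gmor_ext; apply: functional_extensionality.
  - by case=> [[|[|k]] Hk].
  - by move=> e; rewrite (ord1E e).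
have N0 := pnatural h (gedge (G:=simp 2) j0) pth.
have N1 := pnatural h (gedge (G:=simp 2) j1) pth.
have Q0 := Hh 1 (gedge (G:=Xc) true) 1 (gedge (G:=Tg (simp 1)) (inl ord0)).
have Q1 := Hh 1 (gedge (G:=Xc) false) 1 (gedge (G:=Tg (simp 1)) (inr ord0)).
simpl in N0, N1, Q0, Q1.
rewrite E0 Q0 in N0; rewrite E1 Q1 in N1.
have M0 := congr1 (fun g : gmor (simp 1) (Tg Xc) => mE g ord0) (congr1 (@proj1_sig _ _) N0).
have M1 := congr1 (fun g : gmor (simp 1) (Tg Xc) => mE g ord0) (congr1 (@proj1_sig _ _) N1).
simpl in M0, M1.
move: M0 M1; case: (pcomp h pth) => q [n [f [y Eq]]]; rewrite /= Eq /=.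
have T0 : gtgt (mE y j0) = gsrc (mE y j1).
  rewrite (mtgt y j0) (msrc y j1); congr (mV y); by apply: val_inj.
move: T0; case: (mE y j0) => k1 //=; case: (mE y j1) => k2 //=.
move=> Ek [Hk1] [Hk2].
move/lift_inj: Ek => Ek; subst k2.
by rewrite -Hk1 in Hk2.
Qed.

Theorem proposition7p6 :
  Delta0_nervous /\ Delta0_induced /\ ~ has_arities_Delta0.
Proof. split; [exact: nervous | split; [exact: induced | exact: not_arities]]. Qed.
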